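(* Let $s$ be a sequence of positive integers. The set of peakless $s$-words $\mathrm{Av}_s(132,231,121)$ is contained in every zig-zag language $L\subseteq S_s$.
   Context: For a sequence $s=(s_1,\dots,s_m)$ of positive integers, an $s$-word is a word with exactly $s_i$ copies of $i$ for each $i\in[m]$; $S_s$ is the set of $s$-words. A word $w$ contains a pattern $\alpha=\alpha_1\cdots\alpha_\ell$ (over $[k]$, using all values of $[k]$) if there are indices $i_1<\dots<i_\ell$ with $w_{i_a}<w_{i_b}$ iff $\alpha_a<\alpha_b$ and $w_{i_a}=w_{i_b}$ iff $\alpha_a=\alpha_b$; $\mathrm{Av}_s(132,231,121)$ is the set of $s$-words containing none of $132$, $231$, $121$. Parent operation: $p(s)=(s_1,\dots,s_{m-1},s_m-1)$ if $s_m>1$ and $p(s)=(s_1,\dots,s_{m-1})$ if $s_m=1$; for an $s$-word $w$, $p(w)$ deletes the rightmost copy of $m$; $p(L)=\{p(w):w\in L\}$. Zig-zag language (recursive on $n=\sum s_i$): for the empty sequence the only zig-zag language is $\{\varepsilon\}$. For $n\ge1$, $L\subseteq S_s$ is zig-zag if $p(L)$ is a zig-zag language of $p(s)$-words and for every $w'\in p(L)$ both of the following lie in $L$: (a) $w'm$, and (b) $mw'$ if $s_m=1$, or, if $s_m>1$, the word obtained by inserting $m$ immediately next to the rightmost $m$ of $w'$. *)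

(* Defs.v *)
From mathcomp Require Import all_boot.
Set Implicit Arguments. Unset Strict Implicit. Unset Printing Implicit Defensive.

(* s = (s_1,...,s_m) is [s : seq nat], with s_i = nth 0 s i.-1 and m = size s. *)

Definition is_sword (s : seq nat) (w : seq nat) : bool :=
  all (fun x => 0 < x <= size s) w &&
  all (fun i => count_mem i w == nth 0 s i.-1) (iota 1 (size s)).

Definition contains_pat (w alpha : seq nat) : Prop :=
  exists u : seq nat, [/\ subseq u w, size u = size alpha &
    forall a b, a < size alpha -> b < size alpha ->
      ((nth 0 u a < nth 0 u b) = (nth 0 alpha a < nth 0 alpha b)) /\
      ((nth 0 u a == nth 0 u b) = (nth 0 alpha a == nth 0 alpha b))].

Definition peakless (s w : seq nat) : Prop :=
  is_sword s w /\ ~ contains_pat w [:: 1; 3; 2] /\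
  ~ contains_pat w [:: 2; 3; 1] /\ ~ contains_pat w [:: 1; 2; 1].

Definition parent_seq (s : seq nat) : seq nat :=
  if 1 < last 0 s then rcons (take (size s).-1 s) (last 0 s).-1
  else take (size s).-1 s.

Definition parent_word (m : nat) (w : seq nat) : seq nat :=
  rev (rem m (rev w)).

Definition dup_rightmost (m : nat) (w : seq nat) : seq nat :=
  let r := rev w in let k := index m r in
  rev (take k r ++ m :: drop k r).

Definition parent_lang (m : nat) (L : seq nat -> Prop) : seq nat -> Prop :=
  fun u => exists2 w, L w & u = parent_word m w.

Inductive zigzag : seq nat -> (seq nat -> Prop) -> Prop :=
| zigzag_nil (L : seq nat -> Prop) :
    (forall w, L w <-> w = [::]) -> zigzag [::] L
| zigzag_step (s : seq nat) (L : seq nat -> Prop) :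
    s <> [::] ->
    (forall w, L w -> is_sword s w) ->
    zigzag (parent_seq s) (parent_lang (size s) L) ->
    (forall w', parent_lang (size s) L w' ->
       L (rcons w' (size s)) /\
       L (if last 0 s == 1 then size s :: w' else dup_rightmost (size s) w')) ->
    zigzag s L.

(* Main.v *)
Require Import Defs.
From mathcomp Require Import all_boot.
From mathcomp Require Import zify.

Lemma pat_subseq w1 w2 alpha : subseq w1 w2 -> contains_pat w1 alpha -> contains_pat w2 alpha.
Proof. move=> h [u [h1 h2 h3]]; exists u; split => //; exact: subseq_trans h1 h. Qed.

Lemma parent_subseq m w : subseq (parent_word m w) w.
Proof. by rewrite /parent_word -{2}(revK w) subseq_rev rem_subseq. Qed.

Lemma no_peak s w x m y : peakless s w -> subseq [:: x; m; y] w -> x < m -> y < m -> False.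
Proof.
move=> [_ [h132 [h231 h121]]] hs hx hy.
case: (ltngtP x y) => hxy.
- apply: h132; exists [:: x; m; y]; split => //.
  move=> [|[|[|a]]] [|[|[|b]]] //= _ _; split; apply/idP/idP; lia.
- apply: h231; exists [:: x; m; y]; split => //.
  move=> [|[|[|a]]] [|[|[|b]]] //= _ _; split; apply/idP/idP; lia.
- apply: h121; exists [:: x; m; y]; split => //.
  move=> [|[|[|a]]] [|[|[|b]]] //= _ _; split; apply/idP/idP; lia.
Qed.

Lemma decomp (m : nat) w : exists k t, w = nseq k m ++ t /\ (forall y t', t = y :: t' -> y != m).
Proof.
elim: w => [|x w [k [t [-> ht]]]]; first by exists 0, [::].
case: (eqVneq x m) => [e|hx]; first by subst x; exists k.+1, t.
by exists 0, (x :: nseq k m ++ t); split => // y t' [<- _].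
Qed.

Lemma rem_cat_notin (x : nat) s1 s2 : x \notin s1 -> rem x (s1 ++ s2) = s1 ++ rem x s2.
Proof.
elim: s1 => //= y s1 IH; rewrite in_cons negb_or => /andP[hy hs].
have -> : (y == x) = false by apply/eqP => e; rewrite e eqxx in hy.
by rewrite IH.
Qed.

Lemma sub3 (y m x : nat) t : m \in t -> last y t = x -> x != m -> subseq [:: y; m; x] (y :: t).
Proof.
case/lastP: t => // t z; rewrite last_rcons mem_rcons in_cons => hm <- hzm.
have hm' : m \in t by move: hm; rewrite eq_sym (negbTE hzm).
rewrite /= eqxx -cats1.
change [:: m; z] with ([:: m] ++ [:: z]); apply: cat_subseq => //; by rewrite sub1seq.
Qed.

Lemma count_parent m w i : m \in w -> count_mem i (parent_word m w) = count_mem i w - (m == i).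
Proof.
move=> hm; rewrite /parent_word count_rev.
have hp : perm_eq (rev w) (m :: rem m (rev w)) by apply: perm_to_rem; rewrite mem_rev.
have := (permP hp) (pred1 i); rewrite /= count_rev => ->. lia.
Qed.

Lemma parent_seq_rcons s0 a : parent_seq (rcons s0 a) = if 1 < a then rcons s0 a.-1 else s0.
Proof.
have e : take (size s0) (rcons s0 a) = s0 by rewrite -cats1 take_size_cat.
by rewrite /parent_seq last_rcons size_rcons /= e.
Qed.

Lemma sword_parent s0 a w : 0 < a -> is_sword (rcons s0 a) w ->
  is_sword (parent_seq (rcons s0 a)) (parent_word (size (rcons s0 a)) w).
Proof.
rewrite parent_seq_rcons size_rcons => ha /andP[/allP hl /allP hc].
rewrite size_rcons in hl hc.
set m := (size s0).+1.
have hcm : count_mem m w = a.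
  have hmi : m \in iota 1 (size s0).+1 by rewrite mem_iota /m; lia.
  have /eqP := hc m hmi.
  by rewrite nth_rcons /m /= ltnn eqxx.
have hm : m \in w by rewrite -has_pred1 has_count hcm.
have hsub := parent_subseq m w.
case: (ltnP 1 a) => h1.
- apply/andP; split.
  + apply/allP => x hx; rewrite size_rcons; exact: hl (mem_subseq hsub hx).
  + apply/allP => i; rewrite size_rcons mem_iota => /andP[i1 i2].
    have := hc i; rewrite mem_iota i1 i2 => /(_ isT) /eqP.
    rewrite count_parent // !nth_rcons.
    case: (ltnP i.-1 (size s0)) => h3.
    * have -> : (m == i) = false by apply/eqP; rewrite /m; lia.
      by rewrite subn0 => ->.
    * have ei : i = m by rewrite /m; lia.
      rewrite ei eqxx /m /= eqxx => ->; apply/eqP; lia.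
- have hcp : count_mem m (parent_word m w) = 0 by rewrite count_parent // hcm eqxx; lia.
  apply/andP; split.
  + apply/allP => x hx.
    have := hl x (mem_subseq hsub hx); rewrite -/m => /andP[x1 x2].
    have : x != m by apply/eqP => e; rewrite e in hx; move/count_memPn: hcp; rewrite hx.
    move=> hxm; apply/andP; split => //; rewrite /m in x2 hxm; lia.
  + apply/allP => i; rewrite mem_iota => /andP[i1 i2].
    have := hc i; rewrite mem_iota i1 /= => /(_ (leqW i2)) /eqP.
    rewrite count_parent // nth_rcons.
    have -> : (m == i) = false by apply/eqP; rewrite /m; lia.
    have -> : i.-1 < size s0 by lia.
    by rewrite subn0 => ->.
Qed.

Lemma last_nseq' (x : nat) k : last x (nseq k x) = x.
Proof. by elim: k. Qed.

Lemma ex_rcons (s : seq nat) : s <> [::] -> exists s0 a, s = rcons s0 a.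
Proof. by case/lastP: s => // s0 a _; exists s0, a. Qed.

Theorem mainTheorem6 (s : seq nat) (L : seq nat -> Prop) :
  all (fun x => 0 < x) s -> zigzag s L ->
  forall w : seq nat, peakless s w -> L w.
Proof.
move=> Hpos Hz; elim: Hz Hpos => {s L} [L HL | s L Hne Hsw Hz IH Hstep] Hpos w Hp.
- apply/HL. case: Hp => /andP[hl _] _. case: w hl => //= x w /andP[h _]; lia.
- have [s0 [a Es]] : exists s0 a, s = rcons s0 a.
    exact: ex_rcons.
  subst s.
  move: Hpos; rewrite all_rcons => /andP[ha hpos0].
  set m := size (rcons s0 a).
  have Hpar : parent_lang m L (parent_word m w).
    apply: IH.
    + rewrite parent_seq_rcons; case: ifP => // h1; rewrite all_rcons hpos0 andbT; lia.
    + case: Hp => hsw [h1 [h2 h3]]; split; first exact: sword_parent.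
      split; [|split] => hc; [apply: h1|apply: h2|apply: h3];
        exact: pat_subseq (parent_subseq _ _) hc.
  have [hl hc] := andP (proj1 Hp).
  move/allP: hl => hl; move/allP: hc => hc.
  have hcm : count_mem m w = a.
    have hmi : m \in iota 1 m by rewrite mem_iota /m size_rcons; lia.
    have /eqP := hc m hmi.
    by rewrite nth_rcons /m size_rcons /= ltnn eqxx.
  have hm : m \in w by rewrite -has_pred1 has_count hcm.
  have hlt : forall y, y \in w -> y != m -> y < m.
    move=> y hy hym; have := hl y hy; move: hym; rewrite -/m; lia.
  have [Ew|[w1 [x Ew]]] : w = [::] \/ exists w1 x, w = rcons w1 x.
    by case/lastP: (w) => [|w1 x]; [left|right; exists w1, x].
  + by rewrite Ew in hm.
  have hlast : last 0 w = x by rewrite Ew last_rcons.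
  have hxw : x \in w by rewrite Ew mem_rcons mem_head.
  case: (eqVneq x m) => [ex|hx].
  + have Hpw : parent_word m w = w1.
      by rewrite Ew ex /parent_word rev_rcons /= eqxx revK.
    by have := (Hstep _ Hpar).1; rewrite Hpw; move: Ew; rewrite ex => ->.
  have [k [t [Ewk ht]]] := decomp m w.
  case: k Ewk => [|k'] Ewk.
  + rewrite /= in Ewk.
    case: t Ewk ht => [|y t'] Ewk ht; first by rewrite Ewk in hm.
    have hy := ht y t' erefl.
    exfalso; apply: (@no_peak _ _ y m x Hp).
    * rewrite Ewk; apply: sub3 => //.
      -- by move: hm; rewrite Ewk in_cons eq_sym (negbTE hy).
      -- by move: hlast; rewrite Ewk.
    * by apply: hlt => //; rewrite Ewk mem_head.
    * exact: hlt.
  case: t Ewk ht => [|y t'] Ewk ht.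
  + by move: hlast hx; rewrite Ewk cats0 /= last_nseq' => ->; rewrite eqxx.
  have hy := ht y t' erefl.
  have hyw : y \in w by rewrite Ewk mem_cat mem_head orbT.
  have hnt' : m \notin t'.
    apply/negP => hmt; apply: (@no_peak _ _ y m x Hp).
    * rewrite Ewk; apply: subseq_trans (suffix_subseq _ _).
      apply: sub3 => //; by move: hlast; rewrite Ewk last_cat.
    * exact: hlt.
    * exact: hlt.
  have hnt : m \notin y :: t' by rewrite in_cons negb_or eq_sym hy hnt'.
  have hk : k'.+1 = a.
    move: hcm (count_memPn hnt); rewrite Ewk count_cat count_nseq /= eqxx; lia.
  have Hpw : parent_word m w = nseq k' m ++ y :: t'.
    rewrite /parent_word Ewk rev_cat rev_nseq rem_cat_notin ?mem_rev //= eqxx.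
    by rewrite rev_cat rev_nseq revK.
  have := (Hstep _ Hpar).2; rewrite last_rcons Hpw.
  case: (eqVneq a 1) => ea.
  + move: hk; rewrite ea => -[hk0]; subst k'; rewrite Ewk /=. by rewrite /m ea.
  rewrite -/m.
  case: k' hk Ewk Hpw => [|k''] hk Ewk Hpw; first by rewrite -hk in ea.
  have Er : rev (nseq k''.+1 m ++ y :: t') = rev (y :: t') ++ nseq k''.+1 m by rewrite rev_cat rev_nseq.
  rewrite /dup_rightmost Er index_cat mem_rev (negbTE hnt) /= eqxx addn0.
  rewrite take_size_cat ?size_rev // drop_size_cat ?size_rev //.
  rewrite rev_cat revK.
  change (m :: m :: nseq k'' m) with (nseq k''.+2 m).
  by rewrite rev_nseq Ewk.
Qed.
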